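(* Let $f,g,h$ be smooth real functions of one variable with $f\neq 0$, $g\neq 0$, $g'\neq 0$. Then the equation $$u_t-f(u)u_x-g(u)u_{xx}+h(u)u_x^2=0$$ is strictly self-adjoint if and only if $$h(u)=-\frac{g(u)}{u}-g'(u).$$
   Context: For a differential equation $\mathfrak{F}[u]=0$ in independent variables $t,x$ and dependent variable $u$, introduce a new dependent variable $\nu=\nu(t,x)$. The formal Lagrangian is $\mathfrak{L}=\nu\mathfrak{F}$ and the adjoint is $\mathfrak{F}^*=\frac{\delta\mathfrak{L}}{\delta u}$, where $\frac{\delta}{\delta u}=\frac{\partial}{\partial u}-D_t\frac{\partial}{\partial u_t}-D_x\frac{\partial}{\partial u_x}+D_x^2\frac{\partial}{\partial u_{xx}}$ and $D_t,D_x$ are total derivatives. The equation is strictly self-adjoint if $\mathfrak{F}^*|_{\nu=u}=\lambda\mathfrak{F}$ for some coefficient $\lambda=\lambda(t,x,u,\dots)$ (with derivatives of $\nu$ replaced by the corresponding derivatives of $u$). *)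

(* Defs.v *)
From Stdlib Require Import Reals List.
From Coquelicot Require Import Coquelicot.
Open Scope R_scope.

Definition smooth1 (f : R -> R) : Prop := forall n x, ex_derive_n f n x.

Definition dt (w : R -> R -> R) : R -> R -> R :=
  fun t x => Derive (fun s => w s x) t.
Definition dx (w : R -> R -> R) : R -> R -> R :=
  fun t x => Derive (fun y => w t y) x.

(** Iterated partial derivative along a list of directions
    (true = d/dt, false = d/dx), applied right-to-left. *)
Fixpoint pd (l : list bool) (w : R -> R -> R) : R -> R -> R :=
  match l with
  | nil => w
  | b :: l' => if b then dt (pd l' w) else dx (pd l' w)
  end.

Definition smooth2 (w : R -> R -> R) : Prop :=
  forall l : list bool,
    (forall t x, ex_derive (fun s => pd l w s x) t /\
                 ex_derive (fun y => pd l w t y) x) /\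
    (forall p : R * R, continuous (fun q : R * R => pd l w (fst q) (snd q)) p).

(** A second-order evolution-type differential function
    F(t, x, u, u_t, u_x, u_xx). *)
Definition DiffFun := R -> R -> R -> R -> R -> R -> R.

Definition formal_lagrangian (F : DiffFun) :
  R -> R -> R -> R -> R -> R -> R -> R :=
  fun t x u ut ux uxx nu => nu * F t x u ut ux uxx.

Definition L_u  (L : R -> R -> R -> R -> R -> R -> R -> R) :=
  fun t x u ut ux uxx nu => Derive (fun z => L t x z ut ux uxx nu) u.
Definition L_ut (L : R -> R -> R -> R -> R -> R -> R -> R) :=
  fun t x u ut ux uxx nu => Derive (fun z => L t x u z ux uxx nu) ut.
Definition L_ux (L : R -> R -> R -> R -> R -> R -> R -> R) :=
  fun t x u ut ux uxx nu => Derive (fun z => L t x u ut z uxx nu) ux.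
Definition L_uxx (L : R -> R -> R -> R -> R -> R -> R -> R) :=
  fun t x u ut ux uxx nu => Derive (fun z => L t x u ut ux z nu) uxx.

Definition along (P : R -> R -> R -> R -> R -> R -> R -> R)
  (u nu : R -> R -> R) : R -> R -> R :=
  fun t x => P t x (u t x) (dt u t x) (dx u t x) (dx (dx u) t x) (nu t x).

(** The adjoint  F* = delta L / delta u
      = dL/du - D_t dL/du_t - D_x dL/du_x + D_x^2 dL/du_xx,
    evaluated along u(t,x), nu(t,x); total derivatives are the partial
    derivatives of the composite functions of (t,x). *)
Definition adjoint_along (F : DiffFun) (u nu : R -> R -> R) (t x : R) : R :=
  let L := formal_lagrangian F in
  along (L_u L) u nu t x
  - dt (along (L_ut L) u nu) t x
  - dx (along (L_ux L) u nu) t x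
  + dx (dx (along (L_uxx L) u nu)) t x.

Definition eval_along (F : DiffFun) (u : R -> R -> R) (t x : R) : R :=
  F t x (u t x) (dt u t x) (dx u t x) (dx (dx u) t x).

(** Strict self-adjointness: there is a coefficient lambda, a function of
    (t, x, u, u_t, u_x, u_tt, u_tx, u_xx), such that F*|_{nu = u} = lambda F
    identically, i.e. along every smooth u at every point. *)
Definition strictly_self_adjoint (F : DiffFun) : Prop :=
  exists lambda : R -> R -> R -> R -> R -> R -> R -> R -> R,
    forall u : R -> R -> R, smooth2 u ->
    forall t x : R,
      adjoint_along F u u t x =
      lambda t x (u t x) (dt u t x) (dx u t x)
             (dt (dt u) t x) (dt (dx u) t x) (dx (dx u) t x)
      * eval_along F u t x.

Definition nonlin_eq (f g h : R -> R) : DiffFun :=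
  fun _ _ u ut ux uxx => ut - f u * ux - g u * uxx + h u * ux ^ 2.

(* Main.v *)
Require Import Defs.
From Stdlib Require Import Reals.
From Coquelicot Require Import Coquelicot.
Open Scope R_scope.
From Stdlib Require Import Lra.
Lemma cpoly (a b c d : R) (p : R * R) : continuous (fun q : R * R => a + b * fst q + c * snd q + d * snd q ^ 2) p.
Proof.
  destruct p as [p1 p2].
  assert (F : continuous (fun q : R*R => fst q) (p1,p2)) by apply continuous_fst.
  assert (S : continuous (fun q : R*R => snd q) (p1,p2)) by apply continuous_snd.
  assert (K : forall k:R, continuous (fun q : R*R => k) (p1,p2)) by (intro; apply continuous_const).
  apply (continuous_plus (fun q : R*R => a + b * fst q + c * snd q) (fun q => d * snd q ^ 2)).
  apply (continuous_plus (fun q : R*R => a + b * fst q) (fun q => c * snd q)).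
  apply (continuous_plus (fun q : R*R => a) (fun q => b * fst q)).
  apply K.
  apply (continuous_mult (fun q : R*R => b) (fun q => fst q)); auto.
  apply (continuous_mult (fun q : R*R => c) (fun q => snd q)); auto.
  apply (continuous_mult (fun q : R*R => d) (fun q => snd q ^ 2)); auto.
  apply (continuous_ext (fun q : R*R => snd q * (snd q * 1))). intros; simpl; ring.
  apply (continuous_mult (fun q : R*R => snd q) (fun q => snd q * 1)); auto.
  apply (continuous_mult (fun q : R*R => snd q) (fun q => 1)); auto.
Qed.


Ltac eta := repeat match goal with |- context [fun x : R => ?F x] => progress change (fun x : R => F x) with F end.
Section S.
Variables f g h : R -> R.
Hypothesis Hf : smooth1 f.
Hypothesis Hg : smooth1 g.
Hypothesis Hh : smooth1 h.

Lemma d1 (k : R -> R) : smooth1 k -> forall y, ex_derive k y.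
Proof. intros H y. exact (H 1%nat y). Qed.
Lemma d2 (k : R -> R) : smooth1 k -> forall y, ex_derive (Derive k) y.
Proof. intros H y. exact (H 2%nat y). Qed.

Ltac exd := match goal with
| |- True => exact I
| |- ex_derive (fun _ => Derive ?k _) _ => apply d2; assumption
| |- ex_derive (fun _ => dx ?u ?t _) _ => solve [auto]
| |- ex_derive (fun _ => ?u ?t _) _ => solve [auto]
| |- ex_derive (fun _ => ?k _) _ => apply d1; assumption
end.
Let L := formal_lagrangian (nonlin_eq f g h).

Lemma Lu_eq t x u ut ux uxx nu : L_u L t x u ut ux uxx nu =
  nu * (- Derive f u * ux - Derive g u * uxx + Derive h u * ux ^ 2).
Proof.
  unfold L_u, L, formal_lagrangian, nonlin_eq.
  apply is_derive_unique. auto_derive.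
  - repeat split; apply d1; auto.
  - eta; ring.
Qed.

Lemma Lut_eq t x u ut ux uxx nu : L_ut L t x u ut ux uxx nu = nu.
Proof.
  unfold L_ut, L, formal_lagrangian, nonlin_eq.
  apply is_derive_unique. auto_derive; auto. eta; ring.
Qed.

Lemma Lux_eq t x u ut ux uxx nu : L_ux L t x u ut ux uxx nu = nu * (- f u + 2 * h u * ux).
Proof.
  unfold L_ux, L, formal_lagrangian, nonlin_eq.
  apply is_derive_unique. auto_derive; auto. eta; ring.
Qed.

Lemma Luxx_eq t x u ut ux uxx nu : L_uxx L t x u ut ux uxx nu = nu * (- g u).
Proof.
  unfold L_uxx, L, formal_lagrangian, nonlin_eq.
  apply is_derive_unique. auto_derive; auto. eta; ring.
Qed.

Lemma A4t (u : R -> R -> R) t :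
  (forall t y, ex_derive (fun y => u t y) y) ->
  (forall t y, ex_derive (fun y => dx u t y) y) ->
 forall y, dx (along (L_uxx L) u u) t y =
     - (dx u t y * g (u t y) + u t y * (Derive g (u t y) * dx u t y)).
Proof.
  intros E0 E1 y. unfold dx at 1, along. 
    rewrite (Derive_ext _ (fun y => u t y * (- g (u t y)))).
    2:{ intros z. rewrite Luxx_eq. reflexivity. }

    apply is_derive_unique. auto_derive.
    - repeat split; auto; apply d1; auto.
    - unfold dx.  eta; ring.
Qed.
Lemma A5t (u : R -> R -> R) t x :
  (forall t y, ex_derive (fun y => u t y) y) ->
  (forall t y, ex_derive (fun y => dx u t y) y) ->
  dx (dx (along (L_uxx L) u u)) t x =
     - (dx (dx u) t x * g (u t x) + dx u t x * (Derive g (u t x) * dx u t x) + (dx u t x * (Derive g (u t x) * dx u t x) + u t x * (Derive (Derive g) (u t x) * dx u t x * dx u t x + Derive g (u t x) * dx (dx u) t x))).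
Proof.
  intros E0 E1.
  transitivity (Derive (fun y => - (dx u t y * g (u t y) + u t y * (Derive g (u t y) * dx u t y))) x).
  { unfold dx at 1. apply Derive_ext. intro y. apply A4t; auto. }
   
    apply is_derive_unique.  auto_derive.   - repeat split; exd.
    - unfold dx. eta; ring.
Qed.

Lemma adj_formula (u : R -> R -> R) t x :
  (forall t y, ex_derive (fun y => u t y) y) ->
  (forall t y, ex_derive (fun y => dx u t y) y) ->
  adjoint_along (nonlin_eq f g h) u u t x =
   - dt u t x + f (u t x) * dx u t x - dx (dx u) t x * (g (u t x) + 2 * u t x * Derive g (u t x) + 2 * u t x * h (u t x))
   + dx u t x ^ 2 * (- u t x * Derive h (u t x) - 2 * h (u t x) - 2 * Derive g (u t x) - u t x * Derive (Derive g) (u t x)).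
Proof.
  intros E0 E1.
  unfold adjoint_along. fold L.
  assert (A1 : along (L_u L) u u t x = u t x * (- Derive f (u t x) * dx u t x - Derive g (u t x) * dx (dx u) t x + Derive h (u t x) * dx u t x ^ 2)).
  { unfold along. rewrite Lu_eq. reflexivity. }
  assert (A2 : dt (along (L_ut L) u u) t x = dt u t x).
  { unfold dt, along. apply Derive_ext. intros s. rewrite Lut_eq. reflexivity. }
  assert (A3 : dx (along (L_ux L) u u) t x =
     dx u t x * (- f (u t x) + 2 * h (u t x) * dx u t x) + u t x * (- Derive f (u t x) * dx u t x + 2 * (Derive h (u t x) * dx u t x * dx u t x + h (u t x) * dx (dx u) t x))).
  { transitivity (Derive (fun y => u t y * (- f (u t y) + 2 * h (u t y) * dx u t y)) x).
    { unfold dx at 1. apply Derive_ext. intros y. unfold along. rewrite Lux_eq. reflexivity. }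
    apply is_derive_unique. auto_derive.
    - repeat split; exd.
    - unfold dx. eta; ring. }
  rewrite A1, A2, A3, A5t by assumption. ring.
Qed.

Lemma phi0 : (forall y : R, y <> 0 -> h y = - g y / y - Derive g y) ->
  forall y, y * h y + g y + y * Derive g y = 0.
Proof.
  intros H y.
  assert (NZ : forall y, y <> 0 -> y * h y + g y + y * Derive g y = 0).
  { intros z Hz. rewrite (H z Hz). field. auto. }
  destruct (Req_dec y 0) as [->|Hy]; [|auto].
  set (phi := fun y => y * h y + g y + y * Derive g y).
  change (phi 0 = 0).
  assert (D : ex_derive phi 0).
  { unfold phi. auto_derive. repeat split; exd. }
  pose proof (ex_derive_continuous phi 0 D) as C.
  assert (L1 : is_lim phi 0 (phi 0)).
  { apply (is_lim_ext (fun y => phi ((fun z => z) y))). reflexivity.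
    apply (is_lim_comp_continuous (fun z => z) phi 0 0). apply is_lim_id. exact C. }
  assert (L2 : is_lim phi 0 0).
  { apply (is_lim_ext_loc (fun _ => 0)). 2: apply is_lim_const.
    simpl. exists (mkposreal 1 Rlt_0_1). intros z _ Hz. symmetry. apply NZ. exact Hz. }
  apply is_lim_unique in L1. apply is_lim_unique in L2.
  rewrite L1 in L2. injection L2. auto.
Qed.

Lemma phi1 : (forall y : R, y <> 0 -> h y = - g y / y - Derive g y) ->
  forall y, h y + y * Derive h y + 2 * Derive g y + y * Derive (Derive g) y = 0.
Proof.
  intros H y.
  set (phi := fun y => y * h y + g y + y * Derive g y).
  assert (D0 : Derive phi y = 0).
  { rewrite (Derive_ext phi (fun _ => 0)). apply Derive_const.
    intro z. unfold phi. apply phi0. exact H. }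
  rewrite <- D0. symmetry. apply is_derive_unique. unfold phi. auto_derive.
  - repeat split; exd.
  - eta; ring.
Qed.
End S.

Lemma smooth2_ex (u : R -> R -> R) : smooth2 u ->
  (forall t y, ex_derive (fun y => u t y) y) /\ (forall t y, ex_derive (fun y => dx u t y) y).
Proof.
  intros H. split; intros t y.
  - exact (proj2 (proj1 (H nil) t y)).
  - exact (proj2 (proj1 (H (cons false nil)) t y)).
Qed.

Lemma poly_pd (y c : R) : forall l, exists a b e d, forall t x,
  pd l (fun t x => y + c * t + x ^ 2 / 2) t x = a + b * t + e * x + d * x ^ 2.
Proof.
  induction l as [|bb l IH].
  - exists y, c, 0, (/2). intros; simpl; field.
  - destruct IH as (a & b & e & d & E). destruct bb; simpl.
    + exists b, 0, 0, 0. intros t x. unfold dt.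
      rewrite (Derive_ext _ (fun s => a + b * s + e * x + d * x ^ 2)) by auto.
      apply is_derive_unique. auto_derive; auto. ring.
    + exists e, 0, (2 * d), 0. intros t x. unfold dx.
      rewrite (Derive_ext _ (fun s => a + b * t + e * s + d * s ^ 2)) by auto.
      apply is_derive_unique. auto_derive; auto. ring.
Qed.

Lemma poly_smooth (y c : R) : smooth2 (fun t x => y + c * t + x ^ 2 / 2).
Proof.
  intros l. destruct (poly_pd y c l) as (a & b & e & d & E). split.
  - intros t x. split.
    + apply (ex_derive_ext (fun s => a + b * s + e * x + d * x ^ 2)).
      intros; rewrite E; auto. auto_derive; auto.
    + apply (ex_derive_ext (fun s => a + b * t + e * s + d * s ^ 2)).
      intros; rewrite E; auto. auto_derive; auto.
  - intros p. apply (continuous_ext (fun q : R * R => a + b * fst q + e * snd q + d * snd q ^ 2)).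
    intros; rewrite E; auto. apply cpoly.
Qed.

Theorem corollary2 (f g h : R -> R)
  (Hf : smooth1 f) (Hg : smooth1 g) (Hh : smooth1 h)
  (Hf0 : exists y, f y <> 0) (Hg0 : exists y, g y <> 0)
  (Hg'0 : exists y, Derive g y <> 0) :
  strictly_self_adjoint (nonlin_eq f g h) <->
  (forall y : R, y <> 0 -> h y = - g y / y - Derive g y).
Proof.
  split.
  - intros [lam Hlam] y Hy.
    set (u := fun t x => y + g y * t + x ^ 2 / 2).
    assert (Hs : smooth2 u) by apply poly_smooth.
    destruct (smooth2_ex u Hs) as [E0 E1].
    specialize (Hlam u Hs 0 0).
    rewrite adj_formula in Hlam by assumption.
    assert (V0 : u 0 0 = y) by (unfold u; cbv beta; field).
    assert (V1 : dt u 0 0 = g y).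
    { unfold dt, u. apply is_derive_unique. auto_derive; auto. ring. }
    assert (V2' : forall z, dx u 0 z = z).
    { intro z. unfold dx, u. apply is_derive_unique. auto_derive; auto. field. }
    assert (V2 : dx u 0 0 = 0) by apply V2'.
    assert (V3 : dx (dx u) 0 0 = 1).
    { unfold dx at 1. rewrite (Derive_ext _ (fun z => z) _ V2').
      apply is_derive_unique. auto_derive; auto. }
    assert (Z : eval_along (nonlin_eq f g h) u 0 0 = 0).
    { unfold eval_along, nonlin_eq. rewrite V0, V1, V2, V3. ring. }
    rewrite Z, Rmult_0_r in Hlam. rewrite V0, V1, V2, V3 in Hlam.
    apply (Rmult_eq_reg_l y); auto. field_simplify; auto.
    apply Rminus_diag_uniq. rewrite <- (Rmult_0_r (-/2)), <- Hlam. field.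
  - intros H. exists (fun _ _ _ _ _ _ _ _ => -1).
    intros u Hu t x. destruct (smooth2_ex u Hu) as [E0 E1].
    rewrite adj_formula by assumption.
    unfold eval_along, nonlin_eq.
    pose proof (phi0 g h Hg Hh H (u t x)) as P0.
    pose proof (phi1 g h Hg Hh H (u t x)) as P1.
    apply Rminus_diag_uniq.
    transitivity (-(2 * dx (dx u) t x) * (u t x * h (u t x) + g (u t x) + u t x * Derive g (u t x))
       - dx u t x ^ 2 * (h (u t x) + u t x * Derive h (u t x) + 2 * Derive g (u t x) + u t x * Derive (Derive g) (u t x))).
    + ring.
    + rewrite P0, P1. ring.
Qed.
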